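(* Let $\mu\in (0,\frac{1}{10})$. Then there exists a constant $\alpha>0$ such that for every sufficiently large integer $n$ the following holds. If $F$ is a forest without isolated vertices such that $v(F)\geq (1-\mu)n$ and $\Delta(F)\leq \alpha\sqrt{n}$, then $F$ has a leaf matching of size at least $\mu\sqrt{n}$ or a bare path of length at least $\mu\sqrt{n}$.
   Context: A leaf of $F$ is a vertex of degree 1. A leaf matching in $F$ is a matching in $F$ each of whose edges contains a leaf of $F$. A bare path in $F$ is a path in $F$ all of whose inner vertices have degree 2 in $F$; its length is its number of edges. *)

(* Defs.v *)
From HB Require Import structures.
From mathcomp Require Import all_boot all_order all_algebra.
From mathcomp Require Export reals.
Set Implicit Arguments. Unset Strict Implicit. Unset Printing Implicit Defensive.

(* A finite simple graph is given by a symmetric irreflexive relation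
   e : rel T on a finType T; its vertex set is T, so v(F) = #|T|. *)

Definition deg (T : finType) (e : rel T) (v : T) : nat := #|[set u | e v u]|.

Definition forest (T : finType) (e : rel T) : Prop :=
  forall (x : T) (p : seq T),
    path e x p -> uniq (x :: p) -> (2 <= size p)%N -> ~~ e (last x p) x.

Definition leaf (T : finType) (e : rel T) (v : T) : bool := deg e v == 1%N.

Definition matching (T : finType) (e : rel T) (M : {set T * T}) : Prop :=
  (forall pq, pq \in M -> e pq.1 pq.2) /\
  (forall pq rs, pq \in M -> rs \in M -> pq != rs ->
     [disjoint [set pq.1; pq.2] & [set rs.1; rs.2]]).

Definition leaf_matching (T : finType) (e : rel T) (M : {set T * T}) : Prop :=
  matching e M /\ (forall pq, pq \in M -> leaf e pq.1 || leaf e pq.2).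

(* The path with vertex sequence x :: p (length = size p edges), all of
   whose inner vertices have degree 2. *)
Definition bare_path (T : finType) (e : rel T) (x : T) (p : seq T) : Prop :=
  [/\ path e x p, uniq (x :: p) & all (fun v => deg e v == 2%N) (behead (belast x p))].

(* Main.v *)
Require Import Defs.
From HB Require Import structures.
From mathcomp Require Import all_boot all_order all_algebra.
From mathcomp Require Import reals.
From mathcomp Require Import zify ring lra boolp.
Import Order.TTheory GRing.Theory Num.Theory.

Set Implicit Arguments. Unset Strict Implicit.
Section Graph.
Variables (T : finType) (e : rel T).
Hypotheses (esym : symmetric e) (eirr : irreflexive e) (efor : forest e).

Lemma back_nbr v q y : path e v q -> uniq (v :: q) -> y \in v :: q ->
  e (last v q) y -> exists s1, v :: q = s1 ++ [:: y; last v q].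
Proof.
move=> pq uq yin.
have [s1 [s2 Es]] : exists s1 s2, v :: q = s1 ++ y :: s2.
  by case/splitPr: yin => s1 s2; exists s1, s2.
have Hl : last v q = last y s2.
  by rewrite -[last v q]/(last v (v :: q)) Es last_cat.
have Hp : path e y s2.
  case: s1 Es => [|a s1] /= [Ev Eqq]; first by rewrite -Ev -Eqq.
  by move: pq; rewrite Eqq cat_path => /andP[_] /= /andP[].
have Hu : uniq (y :: s2) by move: uq; rewrite Es cat_uniq => /and3P[].
case: s2 Hl Hp Hu Es => [|w [|w2 s3]] Hl Hp Hu Es ey.
- by move: ey; rewrite Hl /= eirr.
- by exists s1; rewrite Es Hl.
- by move: (@efor y _ Hp Hu (isT : (2 <= size [:: w, w2 & s3])%N)); rewrite -Hl ey.
Qed.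

Lemma two_back v q y1 y2 : path e v q -> uniq (v :: q) -> y1 != y2 ->
  y1 \in v :: q -> y2 \in v :: q -> e (last v q) y1 -> e (last v q) y2 -> False.
Proof.
move=> pq uq ne i1 i2 e1 e2.
have [s1 E1] := back_nbr pq uq i1 e1.
have [s2 E2] := back_nbr pq uq i2 e2.
move: E1; rewrite E2 => /(congr1 rev); rewrite !rev_cat.
rewrite (_ : rev [:: y2; last v q] = [:: last v q; y2]) //.
rewrite (_ : rev [:: y1; last v q] = [:: last v q; y1]) //.
by move=> [] E _; move: ne; rewrite E eqxx.
Qed.

Lemma maxpath_k (W : {set T}) v k : forall q, (#|T| - size q <= k)%N ->
  path e v q -> uniq (v :: q) -> all (mem W) (v :: q) ->
  exists q', [/\ path e v q', uniq (v :: q'), all (mem W) (v :: q') &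
     forall y, y \in W -> e (last v q') y -> y \in v :: q'].
Proof.
elim: k => [|k IH] q hk pq uq aq.
  have := uniq_leq_size uq (fun x _ => mem_enum T x).
  rewrite -cardT /= => H0; exfalso; move: hk; rewrite leqn0 subn_eq0 leqNgt; move: H0; by move=> ->.
case: (pickP [pred y | (y \in W) && e (last v q) y && (y \notin v :: q)]) => [y /= /andP[/andP[yW ey] yn]|H].
  have := uniq_leq_size uq (fun x _ => mem_enum T x); rewrite -cardT /= => sz.
  apply: (IH (rcons q y)).
  - by rewrite size_rcons; lia.
  - by rewrite rcons_path pq ey.
  - by rewrite -rcons_cons rcons_uniq yn uq.
  - by rewrite -rcons_cons all_rcons aq andbT.
exists q; split => // y yW ey.
by move: (H y) => /=; rewrite yW ey /=; case: (y \in v :: q).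
Qed.

Lemma maxpath (W : {set T}) v : v \in W ->
  exists q, [/\ path e v q, uniq (v :: q), all (mem W) (v :: q) &
     forall y, y \in W -> e (last v q) y -> y \in v :: q].
Proof.
move=> vW; apply: (@maxpath_k W v #|T| [::]) => //=; first by rewrite subn0.
by rewrite vW.
Qed.


Definition degW (W : {set T}) v := #|[set u in W | e v u]|.

Lemma leafW (W : {set T}) : W != set0 -> exists2 w, w \in W & (degW W w <= 1)%N.
Proof.
case/set0Pn => v vW; have [q [pq uq aq mx]] := maxpath vW.
exists (last v q); first by move/allP: aq; apply; exact: mem_last.
rewrite leqNgt; apply/negP => /card_gt1P [y1 [y2 []]].
rewrite !inE => /andP[y1W e1] /andP[y2W e2] ne.
exact: (two_back pq uq ne (mx _ y1W e1) (mx _ y2W e2) e1 e2).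
Qed.

Lemma sum_bool (A : {set T}) (b : pred T) :
  \sum_(i in A) (b i : nat) = #|[set i in A | b i]|.
Proof.
rewrite -sum1_card big_mkcond [RHS]big_mkcond /=; apply: eq_bigr => i _.
by rewrite inE; case: (i \in A); case: (b i).
Qed.

Lemma sumdeg_n n : forall W : {set T}, #|W| = n -> W != set0 ->
  ((\sum_(v in W) degW W v).+2 <= 2 * #|W|)%N.
Proof.
elim: n => [|n IH] W cW W0.
  by move: W0; rewrite -card_gt0 cW.
have [w wW dw] := leafW W0.
have E : \sum_(v in W) degW W v =
   (degW W w + degW W w + \sum_(v in W :\ w) degW (W :\ w) v)%N.
  rewrite (big_setD1 w wW) /= -addnA; congr (_ + _)%N.
  have -> : \sum_(v in W :\ w) degW W v =
            \sum_(v in W :\ w) ((e v w : nat) + degW (W :\ w) v)%N.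
    apply: eq_bigr => v; rewrite !inE => /andP[vw vW].
    rewrite /degW (cardsD1 w); congr (_ + _)%N; first by rewrite !inE wW.
    by apply: eq_card => u; rewrite !inE andbA.
  rewrite big_split /= sum_bool; congr (_ + _)%N.
  apply: eq_card => u; rewrite !inE (esym u w).
  by case: (boolP (u == w)) => [/eqP->|]; rewrite ?eirr ?andbF.
have cW' : #|W :\ w| = n by move: cW; rewrite (cardsD1 w) wW; case.
case: (boolP (W :\ w == set0)) => [/eqP W'0|W'0].
  rewrite E W'0 big_set0 cW.
  have -> : degW W w = 0%N.
    apply: eq_card0 => u; rewrite !inE; apply/negP => /andP[uW ew].
    have : u \in W :\ w by rewrite !inE uW andbT; apply/eqP => uw; move: ew; rewrite uw eirr.
    by rewrite W'0 inE.
  by move: cW'; rewrite W'0 cards0 => <-.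
have := IH _ cW' W'0; rewrite E cW cW'; lia.
Qed.

Lemma sumdeg (W : {set T}) : (\sum_(v in W) degW W v <= 2 * #|W|)%N.
Proof.
case: (boolP (W == set0)) => [/eqP->|W0]; first by rewrite big_set0.
have := sumdeg_n erefl W0; lia.
Qed.


Lemma deg2_eq a x c d : deg e a = 2%N -> e a x -> e a c -> e a d ->
  x != c -> x != d -> c = d.
Proof.
move=> /eqP /cards2P [y1 [y2 [ne E]]].
have H z : e a z -> (z == y1) || (z == y2).
  move=> ez; have : z \in [set u | e a u] by rewrite inE.
  by rewrite E !inE.
move=> /H x12 /H c12 /H d12.
by case/orP: x12 => /eqP->; case/orP: c12 => /eqP->; case/orP: d12 => /eqP->;
  rewrite ?eqxx.
Qed.

Lemma path_det x p q : path e x p -> path e x q -> uniq (x :: p) -> uniq (x :: q) ->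
  size p = size q -> head x p = head x q ->
  all (fun v => deg e v == 2%N) (behead (belast x p)) -> p = q.
Proof.
elim: p x q => [|a p IH] x [|b q] //= /andP[ea pa] /andP[eb pb].
move=> /andP[xap uap] /andP[xbq ubq] [sz] hab; subst b.
case: p IH pa xap uap sz => [|c p] IH pa xap uap sz.
  by case: q pb xbq ubq sz.
case: q pb xbq ubq sz => [|d q] // pb xbq ubq [sz] /= /andP[/eqP da alld].
move: pa pb => /= /andP[ec pc] /andP[ed pd].
have cd : c = d.
  apply: (deg2_eq da (x := x)) => //; first by rewrite esym.
  - by apply: contra xap => /eqP->; rewrite !inE eqxx orbT.
  - by apply: contra xbq => /eqP->; rewrite !inE eqxx orbT.
subst d; congr (_ :: _).
apply: (IH a) => //=; rewrite ?ec ?ed ?pc ?pd //; by rewrite sz.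
Qed.

End Graph.

Lemma card_bigcup_leG (U I : finType) (P : pred I) (F : I -> {set U}) :
  (#|\bigcup_(i | P i) F i| <= \sum_(i | P i) #|F i|)%N.
Proof.
elim/big_rec2: _ => [|i B n _ IH]; first by rewrite cards0.
apply: leq_trans (leq_card_setU _ _) _; exact: leq_add.
Qed.

Section Comb.
Variables (T : finType) (e : rel T).
Hypotheses (esym : symmetric e) (eirr : irreflexive e) (efor : forest e).

Definition hasleaf v := [exists u, e v u && leaf e u].
Definition hh v := odflt v [pick u | e v u && leaf e u].
Definition Vp := [set v | ~~ leaf e v].
Definition AA := [set v | hasleaf v && (~~ leaf e v || (enum_rank v < enum_rank (hh v))%N)].
Definition MM := [set (v, hh v) | v in AA].
Definition SS := [set v in Vp | hasleaf v].
Definition XX := [set v in Vp | (v \in SS) || (2 < deg e v)%N].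

Lemma hhP v : hasleaf v -> e v (hh v) && leaf e (hh v).
Proof.
by rewrite /hasleaf /hh; case: pickP => [u //|H /existsP[u]]; rewrite H.
Qed.

Lemma leaf_uniq l a b : leaf e l -> e l a -> e l b -> a = b.
Proof.
move=> /cards1P [y E] ea eb.
have : a \in [set u | e l u] by rewrite inE.
have : b \in [set u | e l u] by rewrite inE.
by rewrite E !inE => /eqP-> /eqP->.
Qed.

Lemma leaf_nbr l : leaf e l -> exists u, e l u.
Proof.
move=> /cards1P [y E]; exists y.
have : y \in [set u | e l u] by rewrite E inE.
by rewrite inE.
Qed.

Lemma hh_leaf l : leaf e l -> hasleaf l -> forall u, e l u -> hh l = u.
Proof.
move=> ll hl u eu; case/andP: (hhP hl) => e1 _; exact: leaf_uniq ll e1 eu.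
Qed.

Lemma MM_matching : leaf_matching e MM.
Proof.
split; last first.
  by move=> pq /imsetP[v vA ->] /=; move: vA; rewrite inE => /andP[/hhP/andP[_ ->] _]; rewrite orbT.
split.
  by move=> pq /imsetP[v vA ->] /=; move: vA; rewrite inE => /andP[/hhP/andP[-> _] _].
move=> pq rs /imsetP[v vA ->] /imsetP[w wA ->] /= ne.
have vw : v != w by apply: contra ne => /eqP->.
move: vA wA; rewrite !inE => /andP[hv rv] /andP[hw rw].
case/andP: (hhP hv) => ev lv; case/andP: (hhP hw) => ew lw.
have key x y : hasleaf x -> hasleaf y -> 
   (~~ leaf e x || (enum_rank x < enum_rank (hh x))%N) ->
   (~~ leaf e y || (enum_rank y < enum_rank (hh y))%N) -> x != y -> x != hh y.
  move=> hx hy rx ry xy; apply/eqP => E.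
  case/andP: (hhP hx) => ex lx; case/andP: (hhP hy) => ey ly.
  have lxx : leaf e x by rewrite E.
  have hxy : hh x = y by apply: hh_leaf => //; rewrite E esym.
  have ly' : leaf e y by rewrite -hxy.
  move: rx ry; rewrite lxx hxy ly' /= -E => a b.
  by have := ltn_trans a b; rewrite ltnn.
have k1 := key _ _ hv hw rv rw vw.
have k2 : w != hh v by apply: key => //; rewrite eq_sym.
have k3 : hh v != hh w.
  apply/eqP => E; move/eqP: vw; apply; apply: (leaf_uniq lv); rewrite esym //.
  by rewrite E.
rewrite -setI_eq0; apply/eqP/setP => z; rewrite !inE.
apply/negP => /andP[] /orP[] /eqP-> /orP[] /eqP E; move: vw k1 k2 k3; rewrite E ?eqxx //.
Qed.

Lemma card_MM : #|MM| = #|AA|.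
Proof. by apply: card_in_imset => v w _ _ []. Qed.



Lemma card_bigcup_le (I : finType) (P : pred I) (F : I -> {set T}) :
  (#|\bigcup_(i | P i) F i| <= \sum_(i | P i) #|F i|)%N.
Proof.
elim/big_rec2: _ => [|i B n _ IH]; first by rewrite cards0.
apply: leq_trans (leq_card_setU _ _) _; exact: leq_add.
Qed.

Lemma leaves_bound : (#|[set v | leaf e v]| <= \sum_(a in AA) (deg e a).+1)%N.
Proof.
apply: leq_trans (_ : #|\bigcup_(a in AA) (a |: [set u | e a u])| <= _)%N.
  apply: subset_leq_card; apply/subsetP => l; rewrite inE => ll.
  have [u elu] := leaf_nbr ll.
  case: (boolP (leaf e u)) => lu.
    have hl : hasleaf l by apply/existsP; exists u; rewrite elu lu.
    have hu : hasleaf u by apply/existsP; exists l; rewrite esym elu ll.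
    have hhl := hh_leaf ll hl elu.
    have hhu : hh u = l by apply: hh_leaf; rewrite // esym.
    case: (ltngtP (enum_rank l) (enum_rank u)) => r.
    - apply/bigcupP; exists l; last by rewrite !inE eqxx.
      by rewrite inE hl hhl r orbT.
    - apply/bigcupP; exists u; last by rewrite !inE esym elu orbT.
      by rewrite inE hu hhu r orbT.
    - by move: elu; rewrite (enum_rank_inj (val_inj r)) eirr.
  apply/bigcupP; exists u; last by rewrite !inE esym elu orbT.
  rewrite inE lu andbT; apply/existsP; exists l; by rewrite esym elu ll.
apply: leq_trans (card_bigcup_le _ _) _; apply: leq_sum => a _.
by rewrite cardsU1; case: (a \notin _).
Qed.


Hypothesis hpos : forall v, (0 < deg e v)%N.

Lemma sum_sub (B A : {set T}) (F : T -> nat) : B \subset A ->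
  (\sum_(i in B) F i <= \sum_(i in A) F i)%N.
Proof.
move=> BA; rewrite [X in (_ <= X)%N](big_setID B) /= (setIidPr BA); exact: leq_addr.
Qed.

Lemma nl_deg v : ~~ hasleaf v -> degW e Vp v = deg e v.
Proof.
move=> nh; apply: eq_card => u; rewrite !inE.
case evu: (e v u); rewrite ?andbF ?andbT //.
by apply/negP => lu; move/existsPn: nh => /(_ u); rewrite evu lu.
Qed.

Lemma Vp_deg v : v \in Vp -> (2 <= deg e v)%N.
Proof. rewrite inE /leaf => nl; have := hpos v; move: nl; case: (deg e v) => [|[|]]. by []. by []. by []. Qed.

Lemma small_SS v : v \in Vp -> (degW e Vp v <= 1)%N -> v \in SS.
Proof.
move=> vV dv; rewrite inE vV /=; case: (boolP (hasleaf v)) => // nh.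
by move: dv; rewrite nl_deg // leqNgt (Vp_deg vV).
Qed.

Lemma exc1 d : ((d - 2) + 2 <= d + 2 * (d <= 1))%N.
Proof. by case: d => [|[|d]] //=; lia. Qed.
Lemma exc2 d : ((2 < d) <= d - 2)%N.
Proof. by case: d => [|[|[|d]]] //=; lia. Qed.

Lemma sum_excess :
  (\sum_(v in Vp) (degW e Vp v - 2) <= 2 * #|SS|)%N.
Proof.
have s1 := sumdeg esym eirr efor Vp.
have s4 : (\sum_(v in Vp) 2 * (degW e Vp v <= 1) = 2 * #|[set i in Vp | (degW e Vp i <= 1)%N]|)%N.
  by rewrite -sum_bool big_distrr.
have s2 : (\sum_(v in Vp) (degW e Vp v - 2) + #|Vp| * 2 <=
           \sum_(v in Vp) degW e Vp v + 2 * #|[set i in Vp | (degW e Vp i <= 1)%N]|)%N.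
  rewrite -sum_nat_const -s4 -!big_split; apply: leq_sum => v _; exact: exc1.
have s3 : (#|[set i in Vp | (degW e Vp i <= 1)%N]| <= #|SS|)%N.
  apply: subset_leq_card; apply/subsetP => v; rewrite inE => /andP[]; exact: small_SS.
lia.
Qed.

Lemma card_XX : (#|XX| <= 3 * #|SS|)%N.
Proof.
set H := [set v in Vp | (2 < degW e Vp v)%N].
have cH : (#|H| <= 2 * #|SS|)%N.
  apply: leq_trans sum_excess; rewrite -sum_bool; apply: leq_sum => v _.
  exact: exc2.
have sub : XX \subset SS :|: H.
  apply/subsetP => v; rewrite !inE => /andP[vV /orP[->//|dv]].
  case: (boolP (hasleaf v)) => hv; first by rewrite vV.
  by rewrite vV nl_deg // dv orbT.
apply: leq_trans (subset_leq_card sub) _.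
apply: leq_trans (leq_card_setU _ _) _; lia.
Qed.

Lemma XX_Vp : XX \subset Vp.
Proof. by apply/subsetP => v; rewrite inE => /andP[]. Qed.

Lemma sum_XX : (\sum_(x in XX) degW e Vp x <= 8 * #|SS|)%N.
Proof.
apply: leq_trans (_ : \sum_(x in XX) ((degW e Vp x - 2) + 2) <= _)%N.
  by apply: leq_sum => v _; lia.
rewrite big_split /= sum_nat_const.
have := sum_sub (fun v => degW e Vp v - 2)%N XX_Vp.
have := sum_excess; have := card_XX; lia.
Qed.


Lemma W_deg2 v : v \in Vp :\: XX -> deg e v = 2%N /\ ~~ hasleaf v.
Proof.
rewrite !inE => /andP[nX nl].
have h2 := Vp_deg (v:=v); rewrite inE in h2; have {h2} h2 := h2 nl.
move: nX; rewrite nl /= negb_or => /andP[nh nd]; split => //.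
by apply/eqP; rewrite eqn_leq h2 leqNgt nd.
Qed.

Lemma W_nbr v u : v \in Vp :\: XX -> e v u -> u \in Vp.
Proof.
move=> /W_deg2 [_ nh] evu; rewrite inE; apply/negP => lu.
by move/existsPn: nh => /(_ u); rewrite evu lu.
Qed.

Lemma find_path (K : nat) (noBP : forall x p, bare_path e x p -> (size p < K)%N) v :
  v \in Vp :\: XX -> exists x p, [/\ x \in XX, path e x p, uniq (x :: p),
    all (fun z => deg e z == 2%N) (behead (belast x p)) &
    [/\ (size p < K)%N, head x p \in Vp, e x (head x p) & last x p = v]].
Proof.
move=> vW; have [q [pq uq aq mx]] := maxpath e vW.
set W := Vp :\: XX in vW aq mx *.
have wW : last v q \in W by move/allP: aq; apply; exact: mem_last.
have [d2 nh] := W_deg2 wW.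
have [y [yX ewy]] : exists y, y \in XX /\ e (last v q) y.
  move/eqP/cards2P: d2 => [y1 [y2 [ne E]]].
  have : y1 \in [set u | e (last v q) u] by rewrite E !inE eqxx.
  rewrite inE => e1.
  have : y2 \in [set u | e (last v q) u] by rewrite E !inE eqxx orbT.
  rewrite inE => e2.
  case: (boolP (y1 \in XX)) => [y1X|y1X]; first by exists y1.
  case: (boolP (y2 \in XX)) => [y2X|y2X]; first by exists y2.
  have y1W : y1 \in W by rewrite inE y1X (W_nbr wW e1).
  have y2W : y2 \in W by rewrite inE y2X (W_nbr wW e2).
  by case: (two_back eirr efor pq uq ne (mx _ y1W e1) (mx _ y2W e2) e1 e2).
have pW : forall z, z \in rev (v :: q) -> z \in W.
  by move=> z; rewrite mem_rev => zq; move/allP: aq; apply.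
exists y, (rev (v :: q)).
have Ep : rev (v :: q) = last v q :: rev (belast v q) by rewrite lastI rev_rcons.
have pp : path e y (rev (v :: q)).
  rewrite Ep /= esym ewy /= rev_path.
  by rewrite (@eq_path _ _ e _ v q) // => a b; rewrite esym.
have up : uniq (y :: rev (v :: q)).
  rewrite /= rev_uniq uq andbT; apply/negP => /pW; rewrite inE yX.
  by [].
have ap : all (fun z => deg e z == 2%N) (behead (belast y (rev (v :: q)))).
  rewrite Ep /=; apply/allP => z /mem_belast; rewrite -Ep => /pW zW.
  by have [-> _] := W_deg2 zW.
have sp : (size (rev (v :: q)) < K)%N by apply: (noBP y); split.
split => //; split => //; rewrite Ep /=.
- by move: wW; rewrite inE => /andP[].
- by rewrite esym.
- by rewrite -[last (last v q) _]/(last y (last v q :: rev (belast v q))) -Ep rev_cons last_rcons.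
Qed.


Lemma count_W (K : nat) (noBP : forall x p, bare_path e x p -> (size p < K)%N) :
  (#|Vp :\: XX| <= (\sum_(x in XX) degW e Vp x) * K)%N.
Proof.
set E := [set pq : T * T | (pq.1 \in XX) && (pq.2 \in Vp) && e pq.1 pq.2].
have cE : (#|E| <= \sum_(x in XX) degW e Vp x)%N.
  apply: leq_trans (_ : #|\bigcup_(x in XX) [set (x, u) | u in [set u in Vp | e x u]]| <= _)%N.
    apply: subset_leq_card; apply/subsetP => -[x u]; rewrite inE /= => /andP[/andP[xX uV] exu].
    by apply/bigcupP; exists x => //; apply/imsetP; exists u => //; rewrite inE uV exu.
  apply: leq_trans (card_bigcup_leG _ _) _; apply: leq_sum => x _; exact: leq_imset_card.
pose Q (t : (T * T) * 'I_K) z := exists p, [/\ path e t.1.1 p, uniq (t.1.1 :: p),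
   all (fun z => deg e z == 2%N) (behead (belast t.1.1 p)) &
   [/\ size p = val t.2, head t.1.1 p = t.1.2 & last t.1.1 p = z]].
pose phi t := odflt t.1.1 [pick z | `[< Q t z >]].
have sub : Vp :\: XX \subset phi @: setX E [set: 'I_K].
  apply/subsetP => v vW.
  have [x [p [xX px ux ax [sK hV ex lv]]]] := find_path noBP vW.
  apply/imsetP; exists ((x, head x p), Ordinal sK).
    by move: xX hV; rewrite !inE /= => -> ->; rewrite ex.
  rewrite /phi; case: pickP => [z /asboolP [p' [px' ux' ax' [s' h' l']]] | H] /=.
    have E' := path_det esym px' px ux' ux s' h' ax'.
    by rewrite -l' E' lv.
  have : `[< Q ((x, head x p), Ordinal sK) v >].
    by apply/asboolP; exists p; split.
  by rewrite H.
apply: leq_trans (subset_leq_card sub) _.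
apply: leq_trans (leq_imset_card _ _) _.
rewrite cardsX cardsT card_ord; exact: leq_mul.
Qed.


Lemma comb_bound (K : nat) (noBP : forall x p, bare_path e x p -> (size p < K)%N) :
  (#|T| <= \sum_(a in AA) (deg e a).+1 + 3 * #|AA| + 8 * #|AA| * K)%N.
Proof.
have cT : #|T| = (#|[set v | leaf e v]| + #|Vp|)%N.
  rewrite -(cardsC [set v | leaf e v]); congr (_ + _)%N.
  by apply: eq_card => v; rewrite !inE.
have cV : #|Vp| = (#|XX| + #|Vp :\: XX|)%N.
  by rewrite -(cardsID XX Vp) (setIidPr XX_Vp).
have SA : (#|SS| <= #|AA|)%N.
  apply: subset_leq_card; apply/subsetP => v; rewrite !inE => /andP[nl ->].
  by rewrite nl.
have h1 := leaves_bound.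
have h2 := count_W noBP.
have h3 := sum_XX.
have h4 := card_XX.
have h5 : ((\sum_(x in XX) degW e Vp x) * K <= 8 * #|AA| * K)%N.
  by apply: leq_mul => //; lia.
lia.
Qed.

End Comb.

Unset Implicit Arguments. Unset Strict Implicit.
Local Open Scope ring_scope.
Theorem corollaryA2 (R : realType) (mu : R) :
  0 < mu -> mu < 1 / 10%:R ->
  exists alpha : R, 0 < alpha /\
  exists N : nat, forall n : nat, (N <= n)%N ->
  forall (T : finType) (e : rel T),
    symmetric e -> irreflexive e -> forest e ->
    (forall v : T, (0 < deg e v)%N) ->
    (1 - mu) * n%:R <= #|T|%:R ->
    (forall v : T, (deg e v)%:R <= alpha * Num.sqrt (n%:R)) ->
    (exists M : {set T * T},
        leaf_matching e M /\ mu * Num.sqrt (n%:R) <= #|M|%:R)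
    \/
    (exists (x : T) (p : seq T),
        bare_path e x p /\ mu * Num.sqrt (n%:R) <= (size p)%:R).
Proof.
move=> mu0 mu1; exists 1; split => //; exists 4%N => n n4 T e esym eirr efor hpos hT hdeg.
set t := Num.sqrt n%:R in hdeg *.
have t0 : 0 <= t by apply: sqrtr_ge0.
have tt : t * t = n%:R by rewrite -expr2 sqr_sqrtr ?ler0n.
have n4R : 4%:R <= n%:R :> R by rewrite ler_nat.
have t2 : 2 <= t by nra.
have mu10 : mu * 10 < 1.
  by move: mu1; rewrite ltr_pdivlMr ?ltr0n // mulrC.
case: (pselect (exists x p, bare_path e x p /\ mu * t <= (size p)%:R)) => [H|H].
  by right.
case: (lerP (mu * t) (#|MM e|%:R)) => hM.
  by left; exists (MM e); split => //; exact: MM_matching.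
exfalso.
set K := (Num.truncn (mu * t)).+1.
have noBP : forall x p, bare_path e x p -> (size p < K)%N.
  move=> x p bp; rewrite ltnS truncn_ge_nat; last by nra.
  apply/ltW; rewrite ltNge; apply/negP => hle; apply: H; exists x, p; split => //.
have cb := comb_bound esym eirr efor hpos noBP.
move: cb; rewrite -(ler_nat R) !natrD !natrM natr_sum => cb.
have hK : K%:R <= mu * t + 1 :> R.
  by rewrite /K -natr1 lerD2r truncn_le; nra.
set m := #|AA e| in cb.
have hm : m%:R < mu * t by rewrite /m -card_MM.
have hS : \sum_(a in AA e) ((deg e a).+1)%:R <= m%:R * (t + 1) :> R.
  apply: (@le_trans _ _ (\sum_(a in AA e) (t + 1))).
    by apply: ler_sum => a _; rewrite -natr1 lerD2r; move: (hdeg a); rewrite mul1r.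
  by rewrite sumr_const -/m mulr_natl.
have m0 : 0 <= m%:R :> R by rewrite ler0n.
have K0 : 0 <= K%:R :> R by rewrite ler0n.
have : #|T|%:R <= m%:R * (t + 1) + 3 * m%:R + 8 * m%:R * (mu * t + 1) :> R.
  have h8 : 8 * m%:R * K%:R <= 8 * m%:R * (mu * t + 1) :> R by nra.
  apply: le_trans cb _.
  move: hS h8; lra.
move=> hT2.
have hpos' : 0 < t + 12 + 8 * mu * t by nra.
have h0 : m%:R * (t + 12 + 8 * mu * t) < mu * t * (t + 12 + 8 * mu * t).
  by rewrite ltr_pM2r.
have h1 : (1 - mu) * (t * t) < mu * t * (t + 12 + 8 * mu * t).
  rewrite tt; lra.
have h2 : (1 - 2 * mu - 8 * mu * mu) * t < 12 * mu by nra.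
nra.
Qed.
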